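(* Let $S$ be a semigroup with finite $\mathcal{R}$-height, and let $A$ be a left ideal of $S$. Then $\mathrm{H}_{\mathcal{R}}(A)\leq 2\,\mathrm{H}_{\mathcal{R}}(S)$.
   Context: For a semigroup $S$, $S^1$ denotes $S$ with an identity adjoined if necessary. Green's preorder: $a\leq_{\mathcal{R}} b$ iff $aS^1\subseteq bS^1$; $\mathcal{R}$ is the associated equivalence; the $\mathcal{R}$-height $\mathrm{H}_{\mathcal{R}}$ of a semigroup is the supremum of the cardinalities of chains in its poset of $\mathcal{R}$-classes. A left ideal is a non-empty subset $A$ with $SA\subseteq A$; $\mathrm{H}_{\mathcal{R}}(A)$ is computed in $A$ itself. *)

(* Defs.v *)
From Stdlib Require Import List Arith.
Import ListNotations.

Section Green.
Variable T : Type.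
Variable mul : T -> T -> T.

(* A subset of T is a predicate; the carrier P is the semigroup in which
   Green's relation is computed (P = everything for S itself, P = A for a
   left ideal A, which is a subsemigroup). *)

Definition in_prin_right (P : T -> Prop) (b x : T) : Prop :=
  x = b \/ exists c, P c /\ x = mul b c.

Definition Rle (P : T -> Prop) (a b : T) : Prop :=
  forall x, in_prin_right P a x -> in_prin_right P b x.

Definition Rlt (P : T -> Prop) (a b : T) : Prop :=
  Rle P a b /\ ~ Rle P b a.

(* A finite chain of R-classes of P, listed by representatives in strictly
   decreasing order (every later class strictly below every earlier one). *)
Definition Rchain (P : T -> Prop) (l : list T) : Prop :=
  Forall P l /\ ForallOrdPairs (fun a b => Rlt P b a) l.

Definition RHeight (P : T -> Prop) (h : nat) : Prop :=
  (exists l, Rchain P l /\ length l = h) /\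
  (forall l, Rchain P l -> length l <= h).

Definition left_ideal (A : T -> Prop) : Prop :=
  (exists a, A a) /\ forall s a, A a -> A (mul s a).

End Green.

Definition associative_op {T : Type} (mul : T -> T -> T) : Prop :=
  forall x y z, mul x (mul y z) = mul (mul x y) z.

(* Main.v *)
Require Import Defs.
From Stdlib Require Import List Arith Lia Classical.
Import ListNotations.

Fixpoint odds {X : Type} (l : list X) : list X :=
  match l with
  | a :: _ :: r => a :: odds r
  | [a] => [a]
  | [] => []
  end.

Lemma odds_ind_len {X : Type} (Pr : list X -> Prop) :
  Pr [] -> (forall a, Pr [a]) -> (forall a b r, Pr r -> Pr (a :: b :: r)) ->
  forall l, Pr l.
Proof.
  intros H0 H1 H2.
  assert (forall n l, length l <= n -> Pr l).
  { induction n as [|n IH]; intros l Hl.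
    - destruct l; simpl in Hl; [auto | lia].
    - destruct l as [|a [|b r]]; auto. apply H2. apply IH. simpl in Hl. lia. }
  intro l; apply (H (length l)); auto.
Qed.

Lemma In_odds {X : Type} (l : list X) z : In z (odds l) -> In z l.
Proof.
  revert l. apply (odds_ind_len (fun l => In z (odds l) -> In z l)); simpl; auto.
  intros a b r IH [H|H]; auto.
Qed.

Lemma Forall_odds {X : Type} (P : X -> Prop) l : Forall P l -> Forall P (odds l).
Proof.
  intro H. apply Forall_forall. intros z Hz. apply In_odds in Hz.
  rewrite Forall_forall in H. auto.
Qed.

Lemma len_odds {X : Type} (l : list X) : length l <= 2 * length (odds l).
Proof.
  revert l. apply odds_ind_len; simpl; intros; lia.
Qed.

Lemma FOP_odds {X : Type} (R R' : X -> X -> Prop)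
  (Htr : forall x y z, R x y -> R y z -> R' x z) :
  forall l, ForallOrdPairs R l -> ForallOrdPairs R' (odds l).
Proof.
  apply (odds_ind_len (fun l => ForallOrdPairs R l -> ForallOrdPairs R' (odds l))).
  - constructor.
  - intros; simpl; repeat constructor.
  - intros a b r IH H. simpl.
    inversion H as [|? ? Ha Hbr]; subst.
    inversion Hbr as [|? ? Hb Hr]; subst.
    inversion Ha as [|? ? Hab Har]; subst.
    constructor.
    + apply Forall_forall. intros z Hz. apply In_odds in Hz.
      rewrite Forall_forall in Hb. eauto.
    + auto.
Qed.

Lemma max_exists (P : nat -> Prop) : P 0 -> forall B, (forall n, P n -> n <= B) ->
  exists m, P m /\ forall n, P n -> n <= m.
Proof.
  intros H0 B. induction B as [|B IH]; intros HB.
  - exists 0. split; auto.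
  - destruct (classic (P (S B))) as [Hp|Hn].
    + exists (S B); auto.
    + apply IH. intros n Hn'. specialize (HB n Hn').
      assert (n <> S B) by (intro; subst; auto). lia.
Qed.

Section Main.
Variable T : Type.
Variable mul : T -> T -> T.
Hypothesis Hassoc : associative_op mul.
Variable A : T -> Prop.
Hypothesis HA : left_ideal T mul A.

Lemma Rle_refl_prin P a b : Rle T mul P a b -> in_prin_right T mul P b a.
Proof. intro H. apply H. left; reflexivity. Qed.

Lemma prin_trans_S a b x : in_prin_right T mul (fun _ => True) b a ->
  in_prin_right T mul (fun _ => True) a x -> in_prin_right T mul (fun _ => True) b x.
Proof.
  intros [->|[c [_ ->]]] H; auto.
  destruct H as [->|[d [_ ->]]].
  - right; exists c; auto.
  - right; exists (mul c d); split; [auto | first [exact (Hassoc _ _ _) | exact (eq_sym (Hassoc _ _ _))]].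
Qed.

Lemma prin_trans_A a b x : in_prin_right T mul A b a ->
  in_prin_right T mul A a x -> in_prin_right T mul A b x.
Proof.
  intros [->|[c [Hc ->]]] H; auto.
  destruct H as [->|[d [Hd ->]]].
  - right; exists c; auto.
  - right; exists (mul c d); split; [apply HA; auto | first [exact (Hassoc _ _ _) | exact (eq_sym (Hassoc _ _ _))]].
Qed.

Lemma RleA_S a b : Rle T mul A a b -> Rle T mul (fun _ => True) a b.
Proof.
  intros H x Hx. apply Rle_refl_prin in H.
  apply (prin_trans_S a); auto.
  destruct H as [->|[c [_ ->]]]; [left; auto | right; exists c; auto].
Qed.

Lemma key x y z : Rlt T mul A y x -> Rlt T mul A z y -> Rlt T mul (fun _ => True) z x.
Proof.
  intros [Hyx Nxy] [Hzy Nyz]. split.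
  - apply RleA_S. intros w Hw. apply Hyx, Hzy, Hw.
  - intro Hxz. apply Nyz. apply Rle_refl_prin in Hxz.
    apply Rle_refl_prin in Hyx.
    assert (Hzy' : in_prin_right T mul A z y).
    { destruct Hyx as [->|[u [Hu ->]]].
      - exfalso. apply Nxy. intros w Hw; exact Hw.
      - destruct Hxz as [->|[s [_ ->]]].
        + right; exists u; auto.
        + right; exists (mul s u); split; [apply HA; auto | first [exact (Hassoc _ _ _) | exact (eq_sym (Hassoc _ _ _))]]. }
    intros w Hw. eapply prin_trans_A; eauto.
Qed.

Lemma chain_bound h (HS : RHeight T mul (fun _ => True) h) l :
  Rchain T mul A l -> length l <= 2 * h.
Proof.
  intros [Hf Hp].
  assert (Hc : Rchain T mul (fun _ => True) (odds l)).
  { split.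
    - apply Forall_forall; auto.
    - apply (FOP_odds (fun a b => Rlt T mul A b a)); auto.
      intros a b c H1 H2. eapply key; eauto. }
  apply (proj2 HS) in Hc. pose proof (len_odds l). lia.
Qed.

End Main.

Theorem corollary3p9 (T : Type) (mul : T -> T -> T)
  (Hassoc : associative_op mul) (h : nat)
  (HS : RHeight T mul (fun _ => True) h)
  (A : T -> Prop) (HA : left_ideal T mul A) :
  exists hA, RHeight T mul A hA /\ hA <= 2 * h.
Proof.
  destruct (max_exists (fun n => exists l, Rchain T mul A l /\ length l = n))
    with (B := 2 * h) as [m [[l [Hl Hlen]] Hmax]].
  - exists []. split; auto. split; constructor.
  - intros n [l [Hl <-]]. eapply chain_bound; eauto.
  - exists m. split.
    + split; [exists l; auto|]. intros l' Hl'. apply Hmax. eauto.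
    + subst. eapply chain_bound; eauto.
Qed.
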